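(* Let $A\in(0,1)$, $M<0$, $Q>0$, $S>0$ and consider the planar system $$\frac{du}{d\tau}=u^2\big((u+A)(1-u)(u-M)-Qv\big),\qquad \frac{dv}{d\tau}=S(u+A)(u-v)v .$$ Put $T=1-A+M$. (a) If $T^3<-27AM$, then no positive equilibrium $(\tilde u,\tilde u)$, $\tilde u>0$, of the system is a saddle. (b) If a positive equilibrium $(\tilde u,\tilde u)$ satisfies $\tilde u>T+\sqrt{T^2+3(A-M+AM)}$, then it is not a repeller.
   Context: The positive equilibria of the system are exactly the points $(u,u)$ with $u>0$ and $(u+A)(1-u)(u-M)=Qu$. *)

(* Defs.v *)
From Stdlib Require Import Reals.
From Coquelicot Require Import Coquelicot.
Open Scope R_scope.

Definition field_u (A M Q : R) (u v : R) : R :=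
  u ^ 2 * ((u + A) * (1 - u) * (u - M) - Q * v).
Definition field_v (A S : R) (u v : R) : R :=
  S * (u + A) * (u - v) * v.

Definition equilibrium (A M Q S u v : R) : Prop :=
  field_u A M Q u v = 0 /\ field_v A S u v = 0.

Definition jac11 (A M Q S u v : R) : R := Derive (fun x => field_u A M Q x v) u.
Definition jac12 (A M Q S u v : R) : R := Derive (fun y => field_u A M Q u y) v.
Definition jac21 (A M Q S u v : R) : R := Derive (fun x => field_v A S x v) u.
Definition jac22 (A M Q S u v : R) : R := Derive (fun y => field_v A S u y) v.

Definition jac_eigenvalue (A M Q S u v : R) (z : C) : Prop :=
  Cminus (Cmult (Cminus (RtoC (jac11 A M Q S u v)) z)
                (Cminus (RtoC (jac22 A M Q S u v)) z))
         (Cmult (RtoC (jac12 A M Q S u v)) (RtoC (jac21 A M Q S u v))) = RtoC 0.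

Definition is_saddle (A M Q S u v : R) : Prop :=
  equilibrium A M Q S u v /\
  exists l1 l2 : R, l1 < 0 < l2 /\
    jac_eigenvalue A M Q S u v (RtoC l1) /\ jac_eigenvalue A M Q S u v (RtoC l2).

Definition is_repeller (A M Q S u v : R) : Prop :=
  equilibrium A M Q S u v /\
  forall z : C, jac_eigenvalue A M Q S u v z -> 0 < Re z.

(* Main.v *)
Require Import Defs.
From Stdlib Require Import Reals.
From Coquelicot Require Import Coquelicot.
From Stdlib Require Import Lra Psatz.
Open Scope R_scope.

Lemma j11_eq A M Q S u v : jac11 A M Q S u v =
  2*u*((u+A)*(1-u)*(u-M) - Q*v) + u^2*((1-u)*(u-M) - (u+A)*(u-M) + (u+A)*(1-u)).
Proof. unfold jac11, field_u. apply is_derive_unique. auto_derive; [trivial|ring]. Qed.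
Lemma j12_eq A M Q S u v : jac12 A M Q S u v = - Q * u^2.
Proof. unfold jac12, field_u. apply is_derive_unique. auto_derive; [trivial|ring]. Qed.
Lemma j21_eq A M Q S u v : jac21 A M Q S u v = S*(u-v)*v + S*(u+A)*v.
Proof. unfold jac21, field_v. apply is_derive_unique. auto_derive; [trivial|ring]. Qed.
Lemma j22_eq A M Q S u v : jac22 A M Q S u v = S*(u+A)*(u-2*v).
Proof. unfold jac22, field_v. apply is_derive_unique. auto_derive; [trivial|ring]. Qed.

Lemma eig_real A M Q S u v l : jac_eigenvalue A M Q S u v (RtoC l) ->
  (jac11 A M Q S u v - l) * (jac22 A M Q S u v - l) - jac12 A M Q S u v * jac21 A M Q S u v = 0.
Proof.
  unfold jac_eigenvalue. intro H. apply (f_equal fst) in H.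
  unfold Cminus, Cmult, RtoC, Cplus, Copp in H; simpl in H. lra.
Qed.

Lemma eig_exists a b c d : exists z : C,
  Cminus (Cmult (Cminus (RtoC a) z) (Cminus (RtoC d) z)) (Cmult (RtoC b) (RtoC c)) = RtoC 0
  /\ Re z <= (a+d)/2.
Proof.
  destruct (Rle_dec 0 ((a-d)^2 + 4*b*c)) as [H|H].
  - exists ((a + d - sqrt ((a-d)^2+4*b*c))/2, 0). split.
    + pose proof (sqrt_sqrt _ H) as Hs. set (s := sqrt _) in *.
      unfold Cminus, Cmult, RtoC, Cplus, Copp; simpl. f_equal; nra.
    + pose proof (sqrt_pos ((a-d)^2+4*b*c)). simpl in *. lra.
  - assert (H': 0 <= -((a-d)^2 + 4*b*c)/4) by lra.
    exists ((a+d)/2, sqrt (-((a-d)^2 + 4*b*c)/4)). split.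
    + pose proof (sqrt_sqrt _ H') as Hs. set (s := sqrt _) in *.
      unfold Cminus, Cmult, RtoC, Cplus, Copp; simpl. f_equal; nra.
    + simpl; lra.
Qed.

Lemma h_neg A M u T : 0 < u -> A * M < 0 -> T ^ 3 < - 27 * A * M ->
  -2*u^3 + T*u^2 + A*M < 0.
Proof.
  intros hu hAM HT.
  destruct (Rle_lt_dec T 0) as [HT0|HT0].
  - assert (0 < u^3) by (apply pow_lt; lra).
    assert (T*u^2 <= 0) by (assert (0 < u^2) by (apply pow_lt; lra); nra).
    lra.
  - assert (E: 27*(-2*u^3 + T*u^2) = - (3*u-T)^2*(6*u+T) + T^3) by ring.
    assert (0 <= (3*u-T)^2*(6*u+T)).
    { apply Rmult_le_pos; [apply pow2_ge_0|lra]. }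
    lra.
Qed.

Lemma eq_f A M Q u : 0 < u -> field_u A M Q u u = 0 ->
  (u+A)*(1-u)*(u-M) - Q*u = 0.
Proof.
  intros hu H. unfold field_u in H.
  apply Rmult_integral in H as [H|H]; [|exact H].
  exfalso. assert (0 < u^2) by (apply pow_lt; lra). lra.
Qed.

Theorem corollary1 (A M Q S : R)
  (hA : 0 < A < 1) (hM : M < 0) (hQ : 0 < Q) (hS : 0 < S) :
  let T := 1 - A + M in
  (T ^ 3 < - 27 * A * M ->
     forall ut : R, 0 < ut -> equilibrium A M Q S ut ut ->
       ~ is_saddle A M Q S ut ut) /\
  (forall ut : R, 0 < ut -> equilibrium A M Q S ut ut ->
     T + sqrt (T ^ 2 + 3 * (A - M + A * M)) < ut ->
     ~ is_repeller A M Q S ut ut).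
Proof.
  intros T.
  assert (hAM : A * M < 0) by nra.
  split.
  - intros HT ut hu [Heq _] [_ [l1 [l2 [[h1 h2] [E1 E2]]]]].
    apply eig_real in E1. apply eig_real in E2.
    pose proof (eq_f A M Q ut hu Heq) as X.
    set (a := jac11 A M Q S ut ut) in *.
    set (b := jac12 A M Q S ut ut) in *.
    set (c := jac21 A M Q S ut ut) in *.
    set (d := jac22 A M Q S ut ut) in *.
    assert (Hs : (l1-l2)*(l1+l2-(a+d)) =
       ((a-l1)*(d-l1)-b*c) - ((a-l2)*(d-l2)-b*c)) by ring.
    rewrite E1, E2, Rminus_0_r in Hs.
    apply Rmult_integral in Hs as [Hs|Hs]; [lra|].
    assert (Hdet : a*d - b*c = l1*l2).
    { assert (Hx : a*d - b*c = ((a-l1)*(d-l1)-b*c) + l1*(a+d-l1)) by ring.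
      rewrite E1 in Hx. rewrite Hx. replace (a+d-l1) with l2 by lra. ring. }
    assert (Hneg : l1*l2 < 0) by nra.
    assert (Hk : ut*(a*d-b*c) = S*ut^3*(ut+A)*(-(-2*ut^3 + T*ut^2 + A*M))
       + (-3*S*(ut+A)*ut^3)*((ut+A)*(1-ut)*(ut-M) - Q*ut)).
    { unfold a, b, c, d. rewrite j11_eq, j12_eq, j21_eq, j22_eq. unfold T. ring. }
    rewrite X in Hk.
    pose proof (h_neg A M ut T hu hAM HT) as Hh.
    assert (0 < S*ut^3*(ut+A)).
    { assert (0 < ut^3) by (apply pow_lt; lra).
      apply Rmult_lt_0_compat; [apply Rmult_lt_0_compat|]; lra. }
    assert (0 < ut*(a*d-b*c)) by nra.
    nra.
  - intros ut hu [Heq _] Hgt [_ Hrep].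
    pose proof (eq_f A M Q ut hu Heq) as X.
    destruct (eig_exists (jac11 A M Q S ut ut) (jac12 A M Q S ut ut)
       (jac21 A M Q S ut ut) (jac22 A M Q S ut ut)) as [z [Hz Hre]].
    specialize (Hrep z Hz).
    set (B := A - M + A*M) in *.
    assert (HB : 0 < B) by (unfold B; nra).
    assert (Hr0 : 0 <= T^2 + 3*B) by (pose proof (pow2_ge_0 T); lra).
    pose proof (sqrt_sqrt _ Hr0) as Hr.
    pose proof (sqrt_pos (T^2 + 3*B)) as Hrp.
    set (r := sqrt (T^2 + 3*B)) in *.
    assert (HTr : 0 < T + r).
    { destruct (Rle_lt_dec T 0); [|lra].
      assert (T*T < r*r) by (simpl in *; nra). nra. }
    assert (HF : 3*(-3*ut^2 + 2*T*ut + B) = - ((3*ut-T-r)*(3*ut-T+r))).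
    { transitivity (-((3*ut-T)^2 - (T^2+3*B))); [ring|]. rewrite <- Hr. ring. }
    assert (HF' : -3*ut^2 + 2*T*ut + B < 0).
    { assert (0 < (3*ut-T-r)*(3*ut-T+r)) by (apply Rmult_lt_0_compat; lra). lra. }
    assert (Htr : jac11 A M Q S ut ut + jac22 A M Q S ut ut =
       2*ut*((ut+A)*(1-ut)*(ut-M) - Q*ut) + ut^2*(-3*ut^2 + 2*T*ut + B)
       - S*(ut+A)*ut).
    { rewrite j11_eq, j22_eq. unfold T, B. ring. }
    rewrite X in Htr.
    assert (0 < ut^2) by (apply pow_lt; lra).
    assert (ut^2*(-3*ut^2 + 2*T*ut + B) < 0) by nra.
    assert (0 < S*(ut+A)*ut) by (apply Rmult_lt_0_compat; [apply Rmult_lt_0_compat|]; lra).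
    lra.
Qed.
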